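(* Let $\mathcal{P}=\langle V_{\mathcal{P}},F_{\mathcal{P}}\rangle$ be a declassification policy, with public view $\Delta^{\mathcal{P}}_{P},\Gamma^{\mathcal{P}}_{P}$ (defined in the context). Let $e$ be a term containing no type variables (i.e. $\delta(e)$ is syntactically equal to $e$ for every type substitution $\delta$), and suppose $\Delta^{\mathcal{P}}_{P},\Gamma^{\mathcal{P}}_{P}\vdash e:\tau$. Then $e$ is $\mathrm{TRNI}(\mathcal{P},\tau)$, i.e. $\Gamma^{\mathcal{P}}_{C}\vdash e$ (e is typable in the confidential view), $\Delta^{\mathcal{P}}_{P}\vdash\tau$, and for all term substitutions $\langle\gamma_1,\gamma_2\rangle\in I[\mathcal{P}]$ we have $\langle\gamma_1(e),\gamma_2(e)\rangle\in I[\tau]^{ev}$.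
   Context: Language (simply typed call-by-value lambda calculus with type variables). Types $\tau::=\mathbf{int}\mid\alpha\mid\tau_1\times\tau_2\mid\tau_1\to\tau_2$; values $v::=n\mid\langle v,v\rangle\mid\lambda x:\tau.e$ ($n$ integer literals); terms $e::=x\mid v\mid\langle e,e\rangle\mid\pi_i e\mid e_1e_2$; the language is assumed to include primitive arithmetic operators $e\oplus e$ on $\mathbf{int}$ whose applications to well-typed arguments terminate. Evaluation contexts $E::=[.]\mid\langle E,e\rangle\mid\langle v,E\rangle\mid\pi_iE\mid E\,e\mid v\,E$; reduction: $\pi_i\langle v_1,v_2\rangle\to v_i$, $(\lambda x:\tau.e)v\to e[x\mapsto v]$, and $E[e]\to E[e']$ if $e\to e'$; $\to^*$ is the reflexive transitive closure. Typing judgments $\Delta,\Gamma\vdash e:\tau$ ($\Delta$ a set of type variables, $\Gamma$ a map from term variables to types well-formed in $\Delta$) are the standard ones for int literals, variables, pairs, projections, abstraction and application. $\Gamma\vdash e$ means $\Gamma\vdash e:\tau$ for some $\tau$; $\Delta\vdash\tau$ means all type variables of $\tau$ are in $\Delta$. Policy: $\mathcal{P}=\langle V_{\mathcal{P}},F_{\mathcal{P}}\rangle$ where $V_{\mathcal{P}}$ is a finite set of variables (confidential inputs) and $F_{\mathcal{P}}$ is a partial map from $V_{\mathcal{P}}$ to declassification functions $f=\lambda x:\mathbf{int}.e$, each a closed term of type $\mathbf{int}\to\tau_f$ for a closed type $\tau_f$. Let $V_\top=V_{\mathcal{P}}\setminus\mathrm{dom}(F_{\mathcal{P}})$. Confidential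 view: $\Gamma^{\mathcal{P}}_C=\{x:\mathbf{int}\mid x\in V_\top\}\cup\bigcup_{x\in\mathrm{dom}F_{\mathcal{P}},F_{\mathcal{P}}(x)=f}\{x:\mathbf{int},\,x_f:\mathbf{int}\to\tau_f\}$. Public view: $\Delta^{\mathcal{P}}_P=\{\alpha_x\mid x\in V_\top\}\cup\{\alpha_f\mid F_{\mathcal{P}}(x)=f\}$ and $\Gamma^{\mathcal{P}}_P=\{x:\alpha_x\mid x\in V_\top\}\cup\{x:\alpha_f,\,x_f:\alpha_f\to\tau_f\mid F_{\mathcal{P}}(x)=f\}$. All variables $x_f,\alpha_x,\alpha_f$ are fresh and pairwise distinct as appropriate. Let $\delta_{\mathcal{P}}$ be the type substitution mapping every $\alpha_x$ and $\alpha_f$ in $\Delta^{\mathcal{P}}_P$ to $\mathbf{int}$. Indistinguishability, for $\tau$ with $\Delta^{\mathcal{P}}_P\vdash\tau$, defined inductively: $\langle n,n\rangle\in I[\mathbf{int}]$; $\langle\langle v_1,v_2\rangle,\langle v_1',v_2'\rangle\rangle\in I[\tau_1\times\tau_2]$ if $\langle v_1,v_1'\rangle\in I[\tau_1]$ and $\langle v_2,v_2'\rangle\in I[\tau_2]$; $\langle v_1,v_2\rangle\in I[\tau_1\to\tau_2]$ if for all $\langle v_1',v_2'\rangle\in I[\tau_1]$, $\langle v_1v_1',v_2v_2'\rangle\in I[\tau_2]^{ev}$; $\langle v_1,v_2\rangle\in I[\alpha_x]$ if $\vdash v_1,v_2:\mathbf{int}$; $\langle v_1,v_2\rangle\in I[\alpha_f]$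 if $\vdash v_1,v_2:\mathbf{int}$ and $\langle f\,v_1,f\,v_2\rangle\in I[\tau_f]^{ev}$; $\langle e_1,e_2\rangle\in I[\tau]^{ev}$ if $\vdash e_1,e_2:\delta_{\mathcal{P}}(\tau)$, $e_1\to^*v_1$, $e_2\to^*v_2$ and $\langle v_1,v_2\rangle\in I[\tau]$. A term substitution $\gamma$ (finite map from term variables to closed values) respects $\Gamma$ if $\mathrm{dom}\gamma=\mathrm{dom}\Gamma$ and $\vdash\gamma(x):\Gamma(x)$ for all $x$. $\langle\gamma_1,\gamma_2\rangle\in I[\mathcal{P}]$ iff both $\gamma_i$ respect $\delta_{\mathcal{P}}(\Gamma^{\mathcal{P}}_P)$ (the context $\Gamma^{\mathcal{P}}_P$ with $\delta_{\mathcal{P}}$ applied to each type), $\gamma_1(x_f)=\gamma_2(x_f)=f$ for every $x_f\in\mathrm{dom}\Gamma^{\mathcal{P}}_P$, and $\langle\gamma_1(x),\gamma_2(x)\rangle\in I[\Gamma^{\mathcal{P}}_P(x)]$ for every other $x\in\mathrm{dom}\Gamma^{\mathcal{P}}_P$. *)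

(* Defs.v *)
From Stdlib Require Import ZArith List Bool Arith.
Import ListNotations.

Definition var := nat.
Definition tyvar := nat.

Inductive ty : Type :=
| TInt : ty
| TVar : tyvar -> ty
| TProd : ty -> ty -> ty
| TArr : ty -> ty -> ty.

(* Terms.  [Op o e1 e2] is a primitive arithmetic operator on int
   (total, hence terminating, semantics [o : Z -> Z -> Z]). *)
Inductive tm : Type :=
| Var : var -> tm
| Int : Z -> tm
| Pair : tm -> tm -> tm
| Fst : tm -> tm
| Snd : tm -> tm
| Lam : var -> ty -> tm -> tm
| App : tm -> tm -> tm
| Op : (Z -> Z -> Z) -> tm -> tm -> tm.

Inductive value : tm -> Prop :=
| V_Int n : value (Int n)
| V_Pair v1 v2 : value v1 -> value v2 -> value (Pair v1 v2)
| V_Lam x t e : value (Lam x t e).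

(* e[x |-> v] (only used with closed v, so no capture issues) *)
Fixpoint subst (x : var) (v : tm) (e : tm) : tm :=
  match e with
  | Var y => if Nat.eqb x y then v else Var y
  | Int n => Int n
  | Pair e1 e2 => Pair (subst x v e1) (subst x v e2)
  | Fst e1 => Fst (subst x v e1)
  | Snd e1 => Snd (subst x v e1)
  | Lam y t b => if Nat.eqb x y then Lam y t b else Lam y t (subst x v b)
  | App e1 e2 => App (subst x v e1) (subst x v e2)
  | Op o e1 e2 => Op o (subst x v e1) (subst x v e2)
  end.

(* Small-step reduction; the congruence rules are exactly the
   evaluation contexts E ::= [.] | <E,e> | <v,E> | pi_i E | E e | v E
   (plus the contexts E (+) e | v (+) E for primitive operators). *)
Inductive step : tm -> tm -> Prop :=
| S_Fst v1 v2 : value v1 -> value v2 -> step (Fst (Pair v1 v2)) v1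
| S_Snd v1 v2 : value v1 -> value v2 -> step (Snd (Pair v1 v2)) v2
| S_Beta x t e v : value v -> step (App (Lam x t e) v) (subst x v e)
| S_Op o n1 n2 : step (Op o (Int n1) (Int n2)) (Int (o n1 n2))
| S_PairL e e' e2 : step e e' -> step (Pair e e2) (Pair e' e2)
| S_PairR v e e' : value v -> step e e' -> step (Pair v e) (Pair v e')
| S_FstC e e' : step e e' -> step (Fst e) (Fst e')
| S_SndC e e' : step e e' -> step (Snd e) (Snd e')
| S_AppL e e' e2 : step e e' -> step (App e e2) (App e' e2)
| S_AppR v e e' : value v -> step e e' -> step (App v e) (App v e')
| S_OpL o e e' e2 : step e e' -> step (Op o e e2) (Op o e' e2)
| S_OpR o v e e' : value v -> step e e' -> step (Op o v e) (Op o v e').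

Inductive steps : tm -> tm -> Prop :=
| steps_refl e : steps e e
| steps_step e1 e2 e3 : step e1 e2 -> steps e2 e3 -> steps e1 e3.

Definition tctx := tyvar -> Prop.

Fixpoint wf_ty (D : tctx) (t : ty) : Prop :=
  match t with
  | TInt => True
  | TVar a => D a
  | TProd t1 t2 => wf_ty D t1 /\ wf_ty D t2
  | TArr t1 t2 => wf_ty D t1 /\ wf_ty D t2
  end.

Definition empty_tctx : tctx := fun _ => False.

Definition closed_ty (t : ty) : Prop := wf_ty empty_tctx t.

(* Term contexts Gamma, as (functional) relations var -> ty *)
Definition ctx := var -> ty -> Prop.
Definition empty_ctx : ctx := fun _ _ => False.
Definition ext (G : ctx) (x : var) (t : ty) : ctx :=
  fun y s => (y = x /\ s = t) \/ (y <> x /\ G y s).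

Inductive has_type (D : tctx) : ctx -> tm -> ty -> Prop :=
| T_Int G n : has_type D G (Int n) TInt
| T_Var G x t : G x t -> has_type D G (Var x) t
| T_Pair G e1 e2 t1 t2 :
    has_type D G e1 t1 -> has_type D G e2 t2 -> has_type D G (Pair e1 e2) (TProd t1 t2)
| T_Fst G e t1 t2 : has_type D G e (TProd t1 t2) -> has_type D G (Fst e) t1
| T_Snd G e t1 t2 : has_type D G e (TProd t1 t2) -> has_type D G (Snd e) t2
| T_Lam G x t1 t2 e :
    wf_ty D t1 -> has_type D (ext G x t1) e t2 -> has_type D G (Lam x t1 e) (TArr t1 t2)
| T_App G e1 e2 t1 t2 :
    has_type D G e1 (TArr t1 t2) -> has_type D G e2 t1 -> has_type D G (App e1 e2) t2
| T_Op G o e1 e2 :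
    has_type D G e1 TInt -> has_type D G e2 TInt -> has_type D G (Op o e1 e2) TInt.

Definition typed_closed (e : tm) (t : ty) : Prop := has_type empty_tctx empty_ctx e t.

Definition typable (D : tctx) (G : ctx) (e : tm) : Prop := exists t, has_type D G e t.

Fixpoint ty_subst (d : tyvar -> ty) (t : ty) : ty :=
  match t with
  | TInt => TInt
  | TVar a => d a
  | TProd t1 t2 => TProd (ty_subst d t1) (ty_subst d t2)
  | TArr t1 t2 => TArr (ty_subst d t1) (ty_subst d t2)
  end.

Fixpoint tm_tsubst (d : tyvar -> ty) (e : tm) : tm :=
  match e with
  | Var y => Var y
  | Int n => Int n
  | Pair e1 e2 => Pair (tm_tsubst d e1) (tm_tsubst d e2)
  | Fst e1 => Fst (tm_tsubst d e1)
  | Snd e1 => Snd (tm_tsubst d e1)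
  | Lam y t b => Lam y (ty_subst d t) (tm_tsubst d b)
  | App e1 e2 => App (tm_tsubst d e1) (tm_tsubst d e2)
  | Op o e1 e2 => Op o (tm_tsubst d e1) (tm_tsubst d e2)
  end.

(* Term substitutions gamma: finite maps from variables to closed values *)
Definition tsubst := var -> option tm.

Fixpoint msubst (g : tsubst) (e : tm) : tm :=
  match e with
  | Var y => match g y with Some v => v | None => Var y end
  | Int n => Int n
  | Pair e1 e2 => Pair (msubst g e1) (msubst g e2)
  | Fst e1 => Fst (msubst g e1)
  | Snd e1 => Snd (msubst g e1)
  | Lam y t b =>
      Lam y t (msubst (fun z => if Nat.eqb z y then None else g z) b)
  | App e1 e2 => App (msubst g e1) (msubst g e2)
  | Op o e1 e2 => Op o (msubst g e1) (msubst g e2)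
  end.

Definition respects (g : tsubst) (G : ctx) : Prop :=
  (forall x, g x <> None <-> exists t, G x t) /\
  (forall x v t, g x = Some v -> G x t -> value v /\ typed_closed v t).

(* V_P is a finite set (list) of variables, F_P a partial map
   from V_P to declassification functions f, each paired with its result
   type tau_f.  The fresh names x_f, alpha_x, alpha_f are given by naming
   functions (x_f and alpha_f are indexed by f, as in the paper). *)
Record policy : Type := {
  VP : list var;
  FP : var -> option (tm * ty);
  xname : tm -> var;
  aname_x : var -> tyvar;
  aname_f : tm -> tyvar
}.

Definition in_Vtop (P : policy) (x : var) : Prop := In x (VP P) /\ FP P x = None.

Definition wf_policy (P : policy) : Prop :=
  (forall x p, FP P x = Some p -> In x (VP P)) /\
  (forall x f tf, FP P x = Some (f, tf) ->
     (exists y b, f = Lam y TInt b) /\ typed_closed f (TArr TInt tf) /\ closed_ty tf) /\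
  (forall x f tf, FP P x = Some (f, tf) -> ~ In (xname P f) (VP P)) /\
  (forall x x' f f' tf tf', FP P x = Some (f, tf) -> FP P x' = Some (f', tf') ->
     xname P f = xname P f' -> f = f') /\
  (forall x x', in_Vtop P x -> in_Vtop P x' -> aname_x P x = aname_x P x' -> x = x') /\
  (forall x x' f f' tf tf', FP P x = Some (f, tf) -> FP P x' = Some (f', tf') ->
     aname_f P f = aname_f P f' -> f = f') /\
  (forall x x' f tf, in_Vtop P x -> FP P x' = Some (f, tf) -> aname_x P x <> aname_f P f).

Definition inDeltaP (P : policy) (a : tyvar) : bool :=
  existsb (fun x => match FP P x with
                    | None => Nat.eqb (aname_x P x) a
                    | Some (f, _) => Nat.eqb (aname_f P f) a
                    end) (VP P).

Definition DeltaP (P : policy) : tctx := fun a => inDeltaP P a = true.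

Definition deltaP (P : policy) (a : tyvar) : ty :=
  if inDeltaP P a then TInt else TVar a.

Inductive GammaP (P : policy) : ctx :=
| GP_top x : in_Vtop P x -> GammaP P x (TVar (aname_x P x))
| GP_decl x f tf : FP P x = Some (f, tf) -> GammaP P x (TVar (aname_f P f))
| GP_declf x f tf : FP P x = Some (f, tf) ->
    GammaP P (xname P f) (TArr (TVar (aname_f P f)) tf).

Inductive GammaC (P : policy) : ctx :=
| GC_top x : in_Vtop P x -> GammaC P x TInt
| GC_decl x f tf : FP P x = Some (f, tf) -> GammaC P x TInt
| GC_declf x f tf : FP P x = Some (f, tf) -> GammaC P (xname P f) (TArr TInt tf).

Definition ctx_tsubst (d : tyvar -> ty) (G : ctx) : ctx :=
  fun x s => exists t, G x t /\ s = ty_subst d t.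

Definition Iev_of (P : policy) (R : tm -> tm -> Prop) (t : ty) (e1 e2 : tm) : Prop :=
  typed_closed e1 (ty_subst (deltaP P) t) /\ typed_closed e2 (ty_subst (deltaP P) t) /\
  exists v1 v2, value v1 /\ value v2 /\ steps e1 v1 /\ steps e2 v2 /\ R v1 v2.

Fixpoint Irel (P : policy) (rho : tyvar -> tm -> tm -> Prop) (t : ty) (v1 v2 : tm) : Prop :=
  match t with
  | TInt => exists n, v1 = Int n /\ v2 = Int n
  | TVar a => rho a v1 v2
  | TProd t1 t2 => exists a1 b1 a2 b2,
      v1 = Pair a1 b1 /\ v2 = Pair a2 b2 /\ Irel P rho t1 a1 a2 /\ Irel P rho t2 b1 b2
  | TArr t1 t2 => forall w1 w2, Irel P rho t1 w1 w2 ->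
      Iev_of P (Irel P rho t2) t2 (App v1 w1) (App v2 w2)
  end.

(* I[tau_f] for closed tau_f does not depend on rho *)
Definition no_tyvar_rel : tyvar -> tm -> tm -> Prop := fun _ _ _ => False.

Definition rhoP (P : policy) (a : tyvar) (v1 v2 : tm) : Prop :=
  ((exists x, in_Vtop P x /\ a = aname_x P x) /\
     typed_closed v1 TInt /\ typed_closed v2 TInt)
  \/
  (exists x f tf, FP P x = Some (f, tf) /\ a = aname_f P f /\
     typed_closed v1 TInt /\ typed_closed v2 TInt /\
     Iev_of P (Irel P no_tyvar_rel tf) tf (App f v1) (App f v2)).

Definition I (P : policy) (t : ty) : tm -> tm -> Prop := Irel P (rhoP P) t.
Definition Iev (P : policy) (t : ty) : tm -> tm -> Prop := Iev_of P (I P t) t.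

Definition IP (P : policy) (g1 g2 : tsubst) : Prop :=
  respects g1 (ctx_tsubst (deltaP P) (GammaP P)) /\
  respects g2 (ctx_tsubst (deltaP P) (GammaP P)) /\
  (forall x f tf, FP P x = Some (f, tf) ->
     g1 (xname P f) = Some f /\ g2 (xname P f) = Some f) /\
  (forall x, In x (VP P) -> forall t, GammaP P x t ->
     exists v1 v2, g1 x = Some v1 /\ g2 x = Some v2 /\ I P t v1 v2).

Definition TRNI (P : policy) (t : ty) (e : tm) : Prop :=
  typable empty_tctx (GammaC P) e /\
  wf_ty (DeltaP P) t /\
  (forall g1 g2, IP P g1 g2 -> Iev P t (msubst g1 e) (msubst g2 e)).

(* Main.v *)
Require Import Defs.
From Stdlib Require Import ZArith List Bool Arith.
Import ListNotations.

Fixpoint notv (e : tm) : Prop :=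
  match e with
  | Var _ | Int _ => True
  | Pair a b | App a b | Op _ a b => notv a /\ notv b
  | Fst a | Snd a => notv a
  | Lam _ t b => closed_ty t /\ notv b
  end.

Definition d0 : tyvar -> ty := fun a => TArr (TVar a) (TVar a).

Lemma closed_of_fix t : ty_subst d0 t = t -> closed_ty t.
Proof.
  induction t; simpl; intros H; unfold closed_ty; simpl; auto.
  - inversion H.
  - injection H; intros; split; [apply IHt1|apply IHt2]; congruence.
  - injection H; intros; split; [apply IHt1|apply IHt2]; congruence.
Qed.

Lemma notv_of e : tm_tsubst d0 e = e -> notv e.
Proof.
  induction e; simpl; intros H; try (injection H; intros); auto.
  split; [apply closed_of_fix|]; auto.
Qed.

Lemma closed_subst t d : closed_ty t -> ty_subst d t = t.
Proof.
  unfold closed_ty; induction t; simpl; intros H; try tauto;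
  destruct H; f_equal; auto.
Qed.

Lemma closed_wf t D : closed_ty t -> wf_ty D t.
Proof.
  unfold closed_ty; induction t; simpl; intros H; unfold empty_tctx in *; tauto.
Qed.

Lemma weaken D G e t : has_type D G e t ->
  forall G', (forall x s, G x s -> G' x s) -> has_type D G' e t.
Proof.
  induction 1; intros G' HG; try (econstructor; eauto; fail).
  constructor; auto. apply IHhas_type.
  unfold ext; intros y s [H1|[H1 H2]]; auto.
Qed.

Lemma weaken_closed e t G : typed_closed e t -> has_type empty_tctx G e t.
Proof.
  intros H; eapply weaken; eauto. intros x s [].
Qed.

Lemma wf_weaken_D D D' t : wf_ty D t -> (forall a, D a -> D' a) -> wf_ty D' t.
Proof. induction t; simpl; intuition. Qed.

Lemma subst_closed_gen D G e t : has_type D G e t ->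
  forall x v, (forall s, ~ G x s) -> subst x v e = e.
Proof.
  induction 1; intros y v Hy; simpl; try (f_equal; eauto; fail).
  - destruct (Nat.eqb_spec y x); subst; auto. exfalso; eapply Hy; eauto.
  - destruct (Nat.eqb_spec y x); subst; auto. f_equal.
    apply IHhas_type. unfold ext; intros s [[? ?]|[? ?]]; [congruence|eapply Hy; eauto].
Qed.

Lemma subst_closed e t x v : typed_closed e t -> subst x v e = e.
Proof. intros H; eapply subst_closed_gen; [exact H|]. intros s []. Qed.

Definition functional (G : ctx) := forall x s s', G x s -> G x s' -> s = s'.

Lemma uniq_ty D G e t : has_type D G e t -> forall D' t', has_type D' G e t' ->
  functional G -> t = t'.
Proof.
  induction 1; intros D' t' H' HF; inversion H'; subst; auto.
  - eapply HF; eauto.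
  - f_equal; eauto.
  - match goal with H : has_type _ _ e _ |- _ => specialize (IHhas_type _ _ H HF) end. congruence.
  - match goal with H : has_type _ _ e _ |- _ => specialize (IHhas_type _ _ H HF) end. congruence.
  - f_equal. eapply IHhas_type; eauto.
    unfold ext, functional; intros y s s' [[? ?]|[? ?]] [[? ?]|[? ?]]; subst; try congruence.
    eapply HF; eauto.
  - match goal with H : has_type _ _ e1 _ |- _ => specialize (IHhas_type1 _ _ H HF) end. congruence.
Qed.

Lemma uniq_closed e t t' : typed_closed e t -> typed_closed e t' -> t = t'.
Proof. intros H H'; eapply uniq_ty; eauto. intros x s s' []. Qed.

Lemma weaken_D D G e t : has_type D G e t -> forall D', (forall a, D a -> D' a) -> has_type D' G e t.
Proof.
  induction 1; intros D' HD; try (econstructor; eauto; fail).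
  constructor; eauto. eapply wf_weaken_D; eauto.
Qed.

Lemma subst_typing D G' e t : has_type D G' e t ->
  forall G x s v, (forall y r, G' y r -> ext G x s y r) -> typed_closed v s ->
  has_type D G (subst x v e) t.
Proof.
  induction 1; intros G0 y s v Hinc Hv; simpl; try (econstructor; eauto; fail).
  - destruct (Hinc _ _ H) as [[? ?]|[? ?]]; subst.
    + rewrite Nat.eqb_refl. eapply weaken_D; [apply weaken_closed; exact Hv|]. intros a [].
    + destruct (Nat.eqb_spec y x); [congruence|]. constructor; auto.
  - destruct (Nat.eqb_spec y x); subst.
    + constructor; auto. eapply weaken; eauto.
      unfold ext; intros z r [[? ?]|[? Hz]]; auto.
      destruct (Hinc _ _ Hz) as [[? ?]|[? ?]]; [congruence|]; auto.
    + constructor; auto. eapply IHhas_type; eauto.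
      unfold ext; intros z r [[? ?]|[? Hz]]; subst.
      * right; split; auto.
      * destruct (Hinc _ _ Hz) as [[? ?]|[? ?]]; subst; auto.
Qed.

Lemma value_nostep v e : value v -> step v e -> False.
Proof.
  intros Hv; revert e; induction Hv; intros e' Hs; inversion Hs; subst; eauto.
Qed.

Lemma step_det e e1 : step e e1 -> forall e9, step e e9 -> e1 = e9.
Proof.
  induction 1; intros e9 Hs; inversion Hs; subst; auto;
  try (exfalso; eapply value_nostep; [|eassumption]; eauto using value; fail);
  try (match goal with H : step (Pair _ _) _ |- _ => 
         exfalso; eapply value_nostep; [|exact H]; constructor; auto end; fail);
  try (match goal with H : step (Int _) _ |- _ => inversion H end);
  try (match goal with H : step (Lam _ _ _) _ |- _ => inversion H end);
  try (f_equal; eauto; fail).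
  all: match goal with Hv: value ?a, Hst: step ?a _ |- _ => exfalso; exact (value_nostep _ _ Hv Hst) end.
Qed.

Lemma preservation e e' : step e e' -> forall t, typed_closed e t -> typed_closed e' t.
Proof.
  unfold typed_closed.
  induction 1; intros ty0 Ht; inversion Ht; subst;
  try (econstructor; eauto; fail).
  all: match goal with H : has_type _ _ (_ _ _) _ |- _ => inversion H; subst end; auto.
  eapply subst_typing; eauto.
Qed.

Lemma steps_pres e e' : steps e e' -> forall t, typed_closed e t -> typed_closed e' t.
Proof. induction 1; eauto using preservation. Qed.

Lemma steps_trans a b c : steps a b -> steps b c -> steps a c.
Proof. induction 1; eauto using steps. Qed.

Lemma steps1 a b : step a b -> steps a b.
Proof. eauto using steps. Qed.

Lemma steps_ctx (F : tm -> tm) (HF : forall a b, step a b -> step (F a) (F b)) a b :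
  steps a b -> steps (F a) (F b).
Proof. induction 1; eauto using steps. Qed.

Lemma steps_PairL a b e2 : steps a b -> steps (Pair a e2) (Pair b e2).
Proof. apply (steps_ctx (fun x => Pair x e2)); auto using step. Qed.
Lemma steps_PairR v a b : value v -> steps a b -> steps (Pair v a) (Pair v b).
Proof. intros; apply (steps_ctx (fun x => Pair v x)); auto using step. Qed.
Lemma steps_Fst a b : steps a b -> steps (Fst a) (Fst b).
Proof. apply (steps_ctx Fst); auto using step. Qed.
Lemma steps_Snd a b : steps a b -> steps (Snd a) (Snd b).
Proof. apply (steps_ctx Snd); auto using step. Qed.
Lemma steps_AppL a b e2 : steps a b -> steps (App a e2) (App b e2).
Proof. apply (steps_ctx (fun x => App x e2)); auto using step. Qed.
Lemma steps_AppR v a b : value v -> steps a b -> steps (App v a) (App v b).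
Proof. intros; apply (steps_ctx (fun x => App v x)); auto using step. Qed.
Lemma steps_OpL o a b e2 : steps a b -> steps (Op o a e2) (Op o b e2).
Proof. apply (steps_ctx (fun x => Op o x e2)); auto using step. Qed.
Lemma steps_OpR o v a b : value v -> steps a b -> steps (Op o v a) (Op o v b).
Proof. intros; apply (steps_ctx (fun x => Op o v x)); auto using step. Qed.

Lemma steps_det_val e v : steps e v -> value v -> forall e', steps e e' -> steps e' v.
Proof.
  intros Hs Hv e' Hs'. revert v Hs Hv. induction Hs'; intros v Hs Hv; auto.
  inversion Hs; subst.
  - exfalso; eapply value_nostep; eauto.
  - rewrite (step_det _ _ H _ H0) in IHHs'. eauto.
Qed.

Lemma app_eval_fun x r : steps x r -> value r -> forall a b, x = App a b ->
  exists a', value a' /\ steps a a'.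
Proof.
  induction 1; intros Hv a b Hx; subst.
  - inversion Hv.
  - inversion H; subst.
    + eexists; split; [constructor|apply steps_refl].
    + destruct (IHsteps Hv _ _ eq_refl) as [a' [? ?]]. eauto using steps.
    + eauto using steps.
Qed.

Definition rem (y : var) (g : tsubst) : tsubst := fun z => if Nat.eqb z y then None else g z.
Definition upd (g : tsubst) (y : var) (w : tm) : tsubst :=
  fun z => if Nat.eqb z y then Some w else g z.

Lemma msubst_ext e : forall g g', (forall z, g z = g' z) -> msubst g e = msubst g' e.
Proof.
  induction e; intros g g' H; simpl; try (f_equal; eauto; fail).
  - rewrite H; auto.
  - f_equal. apply IHe. intros z. destruct (Nat.eqb z v); auto.
Qed.

Lemma msubst_none e : msubst (fun _ => None) e = e.
Proof.
  induction e; simpl; f_equal; auto.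
  rewrite <- IHe at 2. apply msubst_ext. intros z; destruct (Nat.eqb z v); auto.
Qed.

Lemma msubst_subst b : forall g y w,
  (forall z v, g z = Some v -> forall y' w', subst y' w' v = v) ->
  subst y w (msubst (rem y g) b) = msubst (upd g y w) b.
Proof.
  induction b; intros g y w Hg; simpl; try (f_equal; eauto; fail).
  - unfold rem, upd. destruct (Nat.eqb_spec v y); subst.
    + simpl. rewrite Nat.eqb_refl. auto.
    + destruct (g v) eqn:E.
      * eapply Hg; eauto.
      * simpl. destruct (Nat.eqb_spec y v); congruence.
  - destruct (Nat.eqb_spec y v); subst.
    + f_equal. apply msubst_ext. intros z; unfold rem, upd.
      destruct (Nat.eqb z v); auto.
    + f_equal. rewrite (msubst_ext b _ (rem y (rem v g))).
      * rewrite IHb.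
        -- apply msubst_ext. intros z; unfold rem, upd.
           destruct (Nat.eqb_spec z v); destruct (Nat.eqb_spec z y); subst; congruence.
        -- intros z u. unfold rem. destruct (Nat.eqb z v); [discriminate|]. eauto.
      * intros z; unfold rem. destruct (Nat.eqb z v); destruct (Nat.eqb z y); auto.
Qed.

Lemma ts_typing D G e t : has_type D G e t -> notv e ->
  forall d g G', (forall x s, G x s -> (exists v, g x = Some v /\ typed_closed v (ty_subst d s)) \/
                                      (g x = None /\ G' x (ty_subst d s))) ->
  has_type empty_tctx G' (msubst g e) (ty_subst d t).
Proof.
  induction 1; simpl; intros Hn d g G' Hg;
  try (destruct Hn as [Hc Hn]);
  try (econstructor; eauto; fail);
  try (match goal with |- has_type _ _ _ (ty_subst d ?t) => idtac end; simpl in *; econstructor; eauto; fail).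
  - destruct (Hg _ _ H) as [[v [Hv Ht]]|[Hv Ht]]; rewrite Hv.
    + apply weaken_closed; auto.
    + constructor; auto.
  - rewrite (closed_subst _ _ Hc).
    constructor; [exact Hc|].
    apply IHhas_type; auto.
    unfold ext; intros z s [[? ?]|[? Hz]]; subst.
    + right. rewrite Nat.eqb_refl. split; auto. left. rewrite (closed_subst _ _ Hc); auto.
    + destruct (Nat.eqb_spec z x); [congruence|].
      destruct (Hg _ _ Hz) as [[v [Hv Ht]]|[Hv Ht]].
      * left; eauto.
      * right; split; auto.
  - constructor; [apply (IHhas_type1 Hc d g G' Hg)| apply (IHhas_type2 Hn d g G' Hg)].
Qed.

Lemma iev_mono P (R R' : tm -> tm -> Prop) t e1 e2 :
  (forall a b, R a b -> R' a b) -> Iev_of P R t e1 e2 -> Iev_of P R' t e1 e2.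
Proof.
  unfold Iev_of; intros HR (H1 & H2 & v1 & v2 & ?&?&?&?&?). split; auto. split; auto.
  exists v1, v2; auto 10.
Qed.

Lemma irel_closed P t : closed_ty t -> forall rho rho' v1 v2,
  Irel P rho t v1 v2 -> Irel P rho' t v1 v2.
Proof.
  unfold closed_ty, empty_tctx in *; induction t; simpl; intros Hc rho rho' v1 v2 H; try tauto.
  - destruct Hc. destruct H as (a1&b1&a2&b2&?&?&?&?). exists a1,b1,a2,b2; eauto 10.
  - destruct Hc. intros w1 w2 Hw. eapply iev_mono; [|apply H; eapply IHt1; eauto].
    intros; eapply IHt2; eauto.
Qed.

Lemma Lclosed P t : closed_ty t -> forall rho,
  (forall w1 w2, Irel P rho t w1 w2 -> typed_closed w1 t /\ typed_closed w2 t /\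
     exists w1' w2', value w1' /\ value w2' /\ steps w1 w1' /\ steps w2 w2' /\
       Irel P rho t w1' w2') /\
  (exists c1 c2, value c1 /\ value c2 /\ typed_closed c1 t /\ typed_closed c2 t /\
     Irel P rho t c1 c2).
Proof.
  induction t; intros Hc rho; unfold closed_ty, empty_tctx in Hc; simpl in Hc.
  - split.
    + intros w1 w2 [n [-> ->]]. split; [constructor|]. split; [constructor|].
      exists (Int n), (Int n). repeat split; try constructor. simpl; eauto.
    + exists (Int 0), (Int 0). repeat split; try constructor. simpl; eauto.
  - destruct Hc.
  - destruct Hc as [Hc1 Hc2].
    destruct (IHt1 Hc1 rho) as [A1 B1]. destruct (IHt2 Hc2 rho) as [A2 B2].
    split.
    + intros w1 w2 (a1&b1&a2&b2&->&->&Ha&Hb).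
      destruct (A1 _ _ Ha) as (Ta1&Ta2&a1'&a2'&Va1&Va2&Sa1&Sa2&Ra).
      destruct (A2 _ _ Hb) as (Tb1&Tb2&b1'&b2'&Vb1&Vb2&Sb1&Sb2&Rb).
      split; [constructor; auto|]. split; [constructor; auto|].
      exists (Pair a1' b1'), (Pair a2' b2').
      split; [constructor; auto|]. split; [constructor; auto|].
      split; [eapply steps_trans; [apply steps_PairL; eauto|apply steps_PairR; eauto]|].
      split; [eapply steps_trans; [apply steps_PairL; eauto|apply steps_PairR; eauto]|].
      simpl. exists a1', b1', a2', b2'; auto.
    + destruct B1 as (c1&c2&V1&V2&T1&T2&R1). destruct B2 as (d1&d2&W1&W2&U1&U2&R2).
      exists (Pair c1 d1), (Pair c2 d2).
      split; [constructor; auto|]. split; [constructor; auto|].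
      split; [constructor; auto|]. split; [constructor; auto|].
      simpl. exists c1, d1, c2, d2; auto.
  - destruct Hc as [Hc1 Hc2].
    destruct (IHt1 Hc1 rho) as [A1 B1]. destruct (IHt2 Hc2 rho) as [A2 B2].
    split.
    + intros w1 w2 H. simpl in H.
      destruct B1 as (c1&c2&V1&V2&T1&T2&R1).
      destruct (H _ _ R1) as (Q1&Q2&r1&r2&Vr1&Vr2&S1&S2&_).
      rewrite (closed_subst _ _ Hc2) in Q1, Q2.
      assert (Tw1 : typed_closed w1 (TArr t1 t2)).
      { inversion Q1; subst.
        match goal with Hh : has_type _ _ c1 ?s |- _ =>
          rewrite <- (uniq_closed _ _ _ T1 Hh) in * end. auto. }
      assert (Tw2 : typed_closed w2 (TArr t1 t2)).
      { inversion Q2; subst.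
        match goal with Hh : has_type _ _ c2 ?s |- _ =>
          rewrite <- (uniq_closed _ _ _ T2 Hh) in * end. auto. }
      split; auto. split; auto.
      destruct (app_eval_fun _ _ S1 Vr1 _ _ eq_refl) as (w1' & Vw1 & Sw1).
      destruct (app_eval_fun _ _ S2 Vr2 _ _ eq_refl) as (w2' & Vw2 & Sw2).
      exists w1', w2'. do 4 (split; [auto|]).
      simpl. intros u1 u2 Hu.
      destruct (H _ _ Hu) as (P1&P2&q1&q2&Vq1&Vq2&Sq1&Sq2&Rq).
      unfold Iev_of.
      split; [eapply steps_pres; [apply steps_AppL; eauto|exact P1]|].
      split; [eapply steps_pres; [apply steps_AppL; eauto|exact P2]|].
      exists q1, q2. repeat split; auto.
      * eapply steps_det_val; eauto. apply steps_AppL; auto.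
      * eapply steps_det_val; eauto. apply steps_AppL; auto.
    + destruct B2 as (d1&d2&W1&W2&U1&U2&R2).
      exists (Lam 0 t1 d1), (Lam 0 t1 d2).
      assert (L1 : typed_closed (Lam 0 t1 d1) (TArr t1 t2)).
      { constructor; [exact Hc1|]. apply weaken_closed; auto. }
      assert (L2 : typed_closed (Lam 0 t1 d2) (TArr t1 t2)).
      { constructor; [exact Hc1|]. apply weaken_closed; auto. }
      split; [constructor|]. split; [constructor|]. split; [exact L1|]. split; [exact L2|].
      simpl. intros u1 u2 Hu.
      destruct (A1 _ _ Hu) as (Tu1&Tu2&u1'&u2'&Vu1&Vu2&Su1&Su2&Ru).
      unfold Iev_of. rewrite (closed_subst _ _ Hc2).
      split; [econstructor; eauto|]. split; [econstructor; eauto|].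
      exists d1, d2. repeat split; auto.
      * eapply steps_trans; [apply steps_AppR; [constructor|exact Su1]|].
        apply steps1. rewrite <- (subst_closed d1 t2 0 u1') at 2; auto. constructor; auto.
      * eapply steps_trans; [apply steps_AppR; [constructor|exact Su2]|].
        apply steps1. rewrite <- (subst_closed d2 t2 0 u2') at 2; auto. constructor; auto.
Qed.

Definition gclosed (g : tsubst) := forall z v, g z = Some v -> forall y w, subst y w v = v.

Definition env_ok P (G : ctx) (g1 g2 : tsubst) :=
  gclosed g1 /\ gclosed g2 /\
  forall x t, G x t -> exists v1 v2, g1 x = Some v1 /\ g2 x = Some v2 /\ value v1 /\ value v2 /\
    typed_closed v1 (ty_subst (deltaP P) t) /\ typed_closed v2 (ty_subst (deltaP P) t) /\
    Irel P (rhoP P) t v1 v2.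

Lemma gclosed_upd g y w t : gclosed g -> typed_closed w t -> gclosed (upd g y w).
Proof.
  unfold gclosed, upd; intros Hg Hw z v. destruct (Nat.eqb z y).
  - intros [= <-]. intros; eapply subst_closed; eauto.
  - eauto.
Qed.

Lemma FL P D G e t : has_type D G e t -> notv e -> forall g1 g2, env_ok P G g1 g2 ->
  exists v1 v2, value v1 /\ value v2 /\ steps (msubst g1 e) v1 /\ steps (msubst g2 e) v2 /\
    Irel P (rhoP P) t v1 v2.
Proof.
  induction 1; simpl; intros Hn g1 g2 Henv.
  - exists (Int n), (Int n). repeat split; try constructor. simpl; eauto.
  - destruct Henv as (_&_&Henv).
    destruct (Henv _ _ H) as (v1&v2&E1&E2&V1&V2&_&_&R). rewrite E1, E2.
    exists v1, v2; do 4 (split; [auto; apply steps_refl|]); exact R.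
  - destruct Hn as [Hn1 Hn2].
    destruct (IHhas_type1 Hn1 _ _ Henv) as (a1&a2&Va1&Va2&Sa1&Sa2&Ra).
    destruct (IHhas_type2 Hn2 _ _ Henv) as (b1&b2&Vb1&Vb2&Sb1&Sb2&Rb).
    exists (Pair a1 b1), (Pair a2 b2).
    split; [constructor; auto|]. split; [constructor; auto|].
    split; [eapply steps_trans; [apply steps_PairL; eauto|apply steps_PairR; eauto]|].
    split; [eapply steps_trans; [apply steps_PairL; eauto|apply steps_PairR; eauto]|].
    simpl. exists a1, b1, a2, b2; auto.
  - destruct (IHhas_type Hn _ _ Henv) as (p1&p2&Vp1&Vp2&Sp1&Sp2&Rp).
    destruct Rp as (a1&b1&a2&b2&->&->&Ra&Rb).
    inversion Vp1; inversion Vp2; subst.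
    exists a1, a2. repeat split; auto.
    + eapply steps_trans; [apply steps_Fst; eauto|]. apply steps1; constructor; auto.
    + eapply steps_trans; [apply steps_Fst; eauto|]. apply steps1; constructor; auto.
  - destruct (IHhas_type Hn _ _ Henv) as (p1&p2&Vp1&Vp2&Sp1&Sp2&Rp).
    destruct Rp as (a1&b1&a2&b2&->&->&Ra&Rb).
    inversion Vp1; inversion Vp2; subst.
    exists b1, b2. repeat split; auto.
    + eapply steps_trans; [apply steps_Snd; eauto|]. apply steps1; constructor; auto.
    + eapply steps_trans; [apply steps_Snd; eauto|]. apply steps1; constructor; auto.
  - destruct Hn as [Hc Hn].
    change (fun z : var => if z =? x then None else g1 z) with (rem x g1).
    change (fun z : var => if z =? x then None else g2 z) with (rem x g2).
    exists (Lam x t1 (msubst (rem x g1) e)), (Lam x t1 (msubst (rem x g2) e)).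
    split; [constructor|]. split; [constructor|]. split; [apply steps_refl|].
    split; [apply steps_refl|].
    destruct Henv as (Gc1 & Gc2 & Henv).
    assert (TL : forall g, (forall y s, G y s -> exists v, g y = Some v /\
                    typed_closed v (ty_subst (deltaP P) s)) ->
               typed_closed (Lam x t1 (msubst (rem x g) e)) (TArr t1 (ty_subst (deltaP P) t2))).
    { intros g Hg.
      pose proof (ts_typing _ _ _ _ (T_Lam D G x t1 t2 e H H0) (conj Hc Hn) (deltaP P) g
                    empty_ctx) as HT.
      simpl in HT. rewrite (closed_subst _ _ Hc) in HT. apply HT.
      intros y s Hy. left. auto. }
    simpl. intros w1 w2 Hw.
    destruct (Lclosed P t1 Hc (rhoP P)) as [A1 _].
    destruct (A1 _ _ Hw) as (Tw1&Tw2&w1'&w2'&Vw1&Vw2&Sw1&Sw2&Rw).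
    destruct (IHhas_type Hn (upd g1 x w1') (upd g2 x w2')) as (r1&r2&Vr1&Vr2&Sr1&Sr2&Rr).
    { split; [eapply gclosed_upd; eauto; eapply steps_pres; eauto|].
      split; [eapply gclosed_upd; eauto; eapply steps_pres; eauto|].
      unfold ext, upd; intros y s [[-> ->]|[Hy HG]].
      - rewrite Nat.eqb_refl. exists w1', w2'. rewrite (closed_subst _ _ Hc).
        repeat split; auto; eapply steps_pres; eauto.
      - destruct (Nat.eqb_spec y x); [congruence|]. auto. }
    unfold Iev_of. split; [|split].
    + econstructor; [apply TL|].
      * intros y s Hy; destruct (Henv _ _ Hy) as (v1&v2&?&?&?&?&?&?&?); eauto.
      * exact Tw1.
    + econstructor; [apply TL|].
      * intros y s Hy; destruct (Henv _ _ Hy) as (v1&v2&?&?&?&?&?&?&?); eauto.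
      * exact Tw2.
    + exists r1, r2. repeat split; auto.
      * eapply steps_trans; [apply steps_AppR; [constructor|exact Sw1]|].
        eapply steps_step; [apply S_Beta; auto|].
        rewrite msubst_subst; auto.
      * eapply steps_trans; [apply steps_AppR; [constructor|exact Sw2]|].
        eapply steps_step; [apply S_Beta; auto|].
        rewrite msubst_subst; auto.
  - destruct Hn as [Hn1 Hn2].
    destruct (IHhas_type1 Hn1 _ _ Henv) as (f1&f2&Vf1&Vf2&Sf1&Sf2&Rf).
    destruct (IHhas_type2 Hn2 _ _ Henv) as (u1&u2&Vu1&Vu2&Su1&Su2&Ru).
    destruct (Rf _ _ Ru) as (_&_&r1&r2&Vr1&Vr2&Sr1&Sr2&Rr).
    exists r1, r2. repeat split; auto.
    + eapply steps_trans; [apply steps_AppL; eauto|].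
      eapply steps_trans; [apply steps_AppR; eauto|]. auto.
    + eapply steps_trans; [apply steps_AppL; eauto|].
      eapply steps_trans; [apply steps_AppR; eauto|]. auto.
  - destruct Hn as [Hn1 Hn2].
    destruct (IHhas_type1 Hn1 _ _ Henv) as (a1&a2&Va1&Va2&Sa1&Sa2&[n [-> ->]]).
    destruct (IHhas_type2 Hn2 _ _ Henv) as (b1&b2&Vb1&Vb2&Sb1&Sb2&[m [-> ->]]).
    exists (Int (o n m)), (Int (o n m)). repeat split; try constructor.
    + eapply steps_trans; [apply steps_OpL; eauto|].
      eapply steps_trans; [apply steps_OpR; [constructor|eauto]|]. apply steps1; constructor.
    + eapply steps_trans; [apply steps_OpL; eauto|].
      eapply steps_trans; [apply steps_OpR; [constructor|eauto]|]. apply steps1; constructor.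
    + simpl; eauto.
Qed.

Lemma inDelta_top P x : In x (VP P) -> FP P x = None -> inDeltaP P (aname_x P x) = true.
Proof.
  intros Hin HF. unfold inDeltaP. apply existsb_exists. exists x. split; auto.
  rewrite HF. apply Nat.eqb_refl.
Qed.

Lemma inDelta_f P x f tf : In x (VP P) -> FP P x = Some (f, tf) -> inDeltaP P (aname_f P f) = true.
Proof.
  intros Hin HF. unfold inDeltaP. apply existsb_exists. exists x. split; auto.
  rewrite HF. apply Nat.eqb_refl.
Qed.

Lemma regularity D G e t : has_type D G e t -> (forall x s, G x s -> wf_ty D s) -> wf_ty D t.
Proof.
  induction 1; intros HG; simpl; eauto.
  - destruct (IHhas_type HG); auto.
  - destruct (IHhas_type HG); auto.
  - split; auto. apply IHhas_type. unfold ext; intros y s [[-> ->]|[_ Hy]]; eauto.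
  - destruct (IHhas_type1 HG); auto.
Qed.

Theorem theorem2 (P : policy) (e : tm) (t : ty) :
  wf_policy P ->
  (forall d : tyvar -> ty, tm_tsubst d e = e) ->
  has_type (DeltaP P) (GammaP P) e t ->
  TRNI P t e.
Proof.
  intros Hwf Hd Ht.
  pose proof Hwf as (W1 & W2 & W3 & W4 & W5 & W6 & W7).
  assert (Hn : notv e) by (apply notv_of; apply Hd).
  split; [|split].
  - exists (ty_subst (deltaP P) t). rewrite <- (msubst_none e).
    apply (ts_typing _ _ _ _ Ht Hn (deltaP P) (fun _ => None) (GammaC P)). intros x s Hx. right. split; auto.
    destruct Hx.
    + unfold deltaP; simpl. destruct H as [Hin HF]. rewrite inDelta_top; auto. apply GC_top.
      split; auto.
    + unfold deltaP; simpl. rewrite (inDelta_f P x f tf); [|eapply W1; eauto|auto]. eapply GC_decl; eauto.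
    + unfold deltaP; simpl. rewrite (inDelta_f P x f tf); [|eapply W1; eauto|auto].
      destruct (W2 _ _ _ H) as (_&_&Hc). rewrite (closed_subst _ _ Hc).
      eapply GC_declf; eauto.
  - eapply regularity; eauto. intros x s Hx. destruct Hx; simpl.
    + destruct H as [Hin HF]. unfold DeltaP. apply inDelta_top; auto.
    + unfold DeltaP. eapply inDelta_f; [eapply W1; eauto|eauto].
    + split.
      * unfold DeltaP. eapply inDelta_f; [eapply W1; eauto|eauto].
      * destruct (W2 _ _ _ H) as (_&_&Hc). apply closed_wf; auto.
  - intros g1 g2 (R1 & R2 & H3 & H4).
    assert (Hrel : forall x s, GammaP P x s -> exists v1 v2, g1 x = Some v1 /\ g2 x = Some v2 /\
                     Irel P (rhoP P) s v1 v2).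
    { unfold I in H4. intros x s Hx. destruct Hx.
      - apply H4; auto. apply H. constructor; auto.
      - apply H4; eauto. constructor 2 with tf; auto.
      - destruct (H3 _ _ _ H) as [E1 E2]. exists f, f. split; auto. split; auto.
        simpl. intros w1 w2 Hw. destruct Hw as [((x' & Hx' & Ea) & _) | (x'' & f' & tf' & HF' & Ea & _ & _ & Hiev)].
        + exfalso. eapply W7; eauto.
        + assert (f' = f) by (symmetry; eapply W6; eauto). subst f'.
          destruct (W2 _ _ _ H) as (_&Tf&Hc). destruct (W2 _ _ _ HF') as (_&Tf'&_).
          pose proof (uniq_closed _ _ _ Tf Tf') as Eq. injection Eq; intros; subst tf'.
          eapply iev_mono; [|exact Hiev]. intros; eapply irel_closed; eauto. }
    assert (Htyp : forall g, respects g (ctx_tsubst (deltaP P) (GammaP P)) ->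
              forall x s v, g x = Some v -> GammaP P x s -> value v /\ typed_closed v (ty_subst (deltaP P) s)).
    { intros g [_ Hg] x s v Ev Hx. apply (Hg x v); auto. exists s; auto. }
    assert (Hcl : forall g, respects g (ctx_tsubst (deltaP P) (GammaP P)) -> gclosed g).
    { intros g [Hg1 Hg2] z v Ev y w.
      assert (Hne : g z <> None) by congruence.
      destruct (proj1 (Hg1 z) Hne) as [s Hs].
      destruct (Hg2 z v s Ev Hs) as [_ Tv]. eapply subst_closed; eauto. }
    assert (Henv : env_ok P (GammaP P) g1 g2).
    { split; [apply Hcl; auto|]. split; [apply Hcl; auto|].
      intros x s Hx. destruct (Hrel x s Hx) as (v1 & v2 & E1 & E2 & R).
      destruct (Htyp g1 R1 x s v1 E1 Hx). destruct (Htyp g2 R2 x s v2 E2 Hx).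
      exists v1, v2; repeat split; auto. }
    destruct (FL P _ _ _ _ Ht Hn g1 g2 Henv) as (v1 & v2 & V1 & V2 & S1 & S2 & R).
    unfold Iev, Iev_of. split; [|split].
    + apply (ts_typing _ _ _ _ Ht Hn (deltaP P) g1 empty_ctx). intros x s Hx. left.
      destruct (Hrel x s Hx) as (v1' & v2' & E1 & E2 & _). exists v1'. split; auto.
      exact (proj2 (Htyp g1 R1 x s v1' E1 Hx)).
    + apply (ts_typing _ _ _ _ Ht Hn (deltaP P) g2 empty_ctx). intros x s Hx. left.
      destruct (Hrel x s Hx) as (v1' & v2' & E1 & E2 & _). exists v2'. split; auto.
      exact (proj2 (Htyp g2 R2 x s v2' E2 Hx)).
    + exists v1, v2. repeat split; auto.
Qed.
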